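(* Fix parameters $\mathfrak h=(h,\varepsilon,\theta)$. Let $w_h,v_h\in\mathbb V_h$ satisfy $$-\Delta^\diamond_{\infty,\mathfrak h}w_h(z)\le-\Delta^\diamond_{\infty,\mathfrak h}v_h(z)\qquad\forall z\in\mathcal N_h^I,\qquad(\ast)$$ and suppose that one of the following holds: (1) for every $z\in\mathcal N_h^I$, $(\ast)$ holds with strict inequality at $z$ or $-\Delta^\diamond_{\infty,\mathfrak h}w_h(z)<0$; (2) for every $z\in\mathcal N_h^I$, $(\ast)$ holds with strict inequality at $z$ or $-\Delta^\diamond_{\infty,\mathfrak h}v_h(z)>0$. Then $$\max_{z\in\mathcal N_h}\big[w_h(z)-v_h(z)\big]=\max_{z\in\mathcal N_h^b}\big[w_h(z)-v_h(z)\big].$$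
   Context: Setting: $\Omega\subset\mathbb R^d$ ($d\ge1$) is a bounded domain with continuous boundary. For $r>0$, $\Omega^{(r)}=\{x\in\Omega:\operatorname{dist}(x,\partial\Omega)>r\}$. $\mathcal T_h$ is a mesh of closed simplices, $h=\max_T\operatorname{diam}T$, $\Omega_h$ the interior of the union of the simplices, with $\Omega^{(h)}\subset\Omega_h\subset\Omega$; $\mathcal N_h$ is the set of vertices. $\mathbb V_h$ is the space of continuous piecewise linear functions on $\mathcal T_h$ and $\mathcal I_h$ is the Lagrange interpolant. Parameters $\mathfrak h=(h,\varepsilon,\theta)$ with $\varepsilon\in[h,\operatorname{diam}\Omega]$, $0<\theta\le1$. Interior nodes $\mathcal N_h^I=\mathcal N_h\cap\Omega^{(2\varepsilon)}$; boundary nodes $\mathcal N_h^b=\mathcal N_h\setminus\mathcal N_h^I$. $\mathbb S_\theta$ is a finite symmetric subset of the unit sphere $\mathbb S$ such that each $v\in\mathbb S$ has $v_\theta\in\mathbb S_\theta$ with $|v-v_\theta|\le\theta$. For $z\in\mathcal N_h^I$, $\mathcal N_{\mathfrak h}(z)=\{z\}\cup\{z+\varepsilon v_\theta:v_\theta\in\mathbb S_\theta\}$, $S^+_{\mathfrak h}w(z)=\varepsilon^{-1}(\max_{x\in\mathcal N_{\mathfrak h}(z)}w(x)-w(z))$, $S^-_{\mathfrak h}w(z)=\varepsilon^{-1}(w(z)-\min_{x\in\mathcal N_{\mathfrak h}(z)}w(x))$, and $-\Delta^\diamond_{\infty,\mathfrak h}w(z)=-\varepsilon^{-1}(S^+_{\mathfrak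 h}\mathcal I_hw(z)-S^-_{\mathfrak h}\mathcal I_hw(z))$ for $w\in C(\overline\Omega)$. *)

(* Defs.v *)
From HB Require Import structures.
From mathcomp Require Import all_boot all_order all_algebra.
From mathcomp Require Import all_classical all_reals all_analysis.
From Stdlib Require Import ClassicalEpsilon.
Set Implicit Arguments. Unset Strict Implicit. Unset Printing Implicit Defensive.
Import Order.TTheory GRing.Theory Num.Theory.
Import numFieldNormedType.Exports.
Local Open Scope classical_set_scope.
Local Open Scope ring_scope.

Section Defs.
Variables (R : realType) (d : nat).
Local Notation pt := 'rV[R]_d.

Definition enorm (x : pt) : R := Num.sqrt (\sum_(i < d) x ord0 i ^+ 2).
Definition eball (x : pt) (r : R) : set pt := [set y | enorm (y - x) < r].

Definition bdry (O : set pt) : set pt := closure O `\` interior O.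
Definition dist_bd (O : set pt) (x : pt) : R :=
  inf [set enorm (x - y) | y in bdry O].
Definition inner (O : set pt) (r : R) : set pt :=
  [set x | O x /\ r < dist_bd O x].
Definition diamset (A : set pt) : R := sup [set enorm (x - y) | x in A & y in A].

Definition is_domain (O : set pt) : Prop := open O /\ connected O /\ O !=set0.
Definition ebounded (O : set pt) : Prop := exists M : R, forall x, O x -> enorm x <= M.

(* continuous boundary: locally, after an orthogonal change of coordinates,
   O lies strictly below the graph of a continuous function of the other
   coordinates *)
Definition orthogonal_mx (Q : 'M[R]_d) : Prop := Q *m Q^T = 1%:M.
Definition continuous_boundary (O : set pt) : Prop :=
  forall x0, bdry O x0 ->
  exists r : R, 0 < r /\
  exists Q : 'M[R]_d, orthogonal_mx Q /\
  exists k : 'I_d, exists g : pt -> R,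
    continuous g /\
    (forall y y' : pt, (forall i, i != k -> y ord0 i = y' ord0 i) -> g y = g y') /\
    (forall x, eball x0 r x ->
       (O x <-> ((x - x0) *m Q) ord0 k < g ((x - x0) *m Q))).

Definition simplex := {ffun 'I_d.+1 -> pt}.
Definition verts (T : simplex) : seq pt := [seq T i | i <- enum 'I_d.+1].
Definition hull_seq (s : seq pt) : set pt :=
  [set x | exists lam : 'I_(size s) -> R,
     (forall i, 0 <= lam i) /\ \sum_i lam i = 1 /\
     x = \sum_i lam i *: nth 0 s i].
Definition shull (T : simplex) : set pt := hull_seq (verts T).
Definition nondeg (T : simplex) : Prop :=
  \det (\matrix_(i < d, j < d) (T (lift ord0 i) - T ord0) ord0 j) != 0.
Definition common_verts (T T' : simplex) : seq pt :=
  [seq x <- verts T | x \in verts T'].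
(* conforming: two simplices meet in a common face (possibly empty) *)
Definition conforming (M : seq simplex) : Prop :=
  forall T T', T \in M -> T' \in M ->
    shull T `&` shull T' = hull_seq (common_verts T T').
Definition is_mesh (M : seq simplex) : Prop :=
  (forall T, T \in M -> nondeg T) /\ conforming M.

Definition meshsize (M : seq simplex) : R :=
  \big[Num.max/0]_(T <- M) diamset (shull T).
Definition union_mesh (M : seq simplex) : set pt :=
  [set x | exists2 T, T \in M & shull T x].
Definition Omega_h (M : seq simplex) : set pt := interior (union_mesh M).
Definition nodes (M : seq simplex) : seq pt := flatten [seq verts T | T <- M].

Definition affine_on (A : set pt) (u : pt -> R) : Prop :=
  exists (a : pt) (b : R), forall x, A x -> u x = \sum_(i < d) a ord0 i * x ord0 i + b.
Definition Vh (M : seq simplex) (u : pt -> R) : Prop :=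
  {within union_mesh M, continuous u} /\ (forall T, T \in M -> affine_on (shull T) u).

Definition Ih (M : seq simplex) (w : pt -> R) : pt -> R :=
  epsilon (inhabits (fun _ : pt => 0))
    (fun u => Vh M u /\ forall z, z \in nodes M -> u z = w z).

Definition theta_net (S : seq pt) (theta : R) : Prop :=
  (forall v, v \in S -> enorm v = 1) /\
  (forall v, v \in S -> - v \in S) /\
  (forall v, enorm v = 1 -> exists2 vt, vt \in S & enorm (v - vt) <= theta).

Definition nbhd (eps : R) (S : seq pt) (z : pt) : seq pt :=
  z :: [seq z + eps *: v | v <- S].
Definition Splus (M : seq simplex) (eps : R) (S : seq pt) (w : pt -> R) (z : pt) : R :=
  eps^-1 * (\big[Num.max/Ih M w z]_(x <- nbhd eps S z) Ih M w x - Ih M w z).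
Definition Sminus (M : seq simplex) (eps : R) (S : seq pt) (w : pt -> R) (z : pt) : R :=
  eps^-1 * (Ih M w z - \big[Num.min/Ih M w z]_(x <- nbhd eps S z) Ih M w x).
Definition mlap (M : seq simplex) (eps : R) (S : seq pt) (w : pt -> R) (z : pt) : R :=
  - (eps^-1 * (Splus M eps S w z - Sminus M eps S w z)).

Definition interior_node (O : set pt) (M : seq simplex) (eps : R) (z : pt) : Prop :=
  z \in nodes M /\ inner O (2 * eps) z.
Definition bnodes (O : set pt) (M : seq simplex) (eps : R) : seq pt :=
  [seq z <- nodes M | ~~ `[< inner O (2 * eps) z >]].

End Defs.

(* Main.v *)
Require Import Defs.
From HB Require Import structures.
From mathcomp Require Import all_boot all_order all_algebra.
From mathcomp Require Import all_classical all_reals all_analysis.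
From mathcomp Require Import lra ring.
From Stdlib Require Import ClassicalEpsilon.
Import Order.TTheory GRing.Theory Num.Theory.
Import numFieldNormedType.Exports.
Local Open Scope classical_set_scope.
Local Open Scope ring_scope.
Section E.
Variables (R : realType) (d : nat).
Local Notation pt := 'rV[R]_d.

Lemma enorm_ge0 (x : pt) : 0 <= enorm x.
Proof. exact: sqrtr_ge0. Qed.

Lemma sumsq_ge0 (x : pt) : 0 <= \sum_(i < d) x ord0 i ^+ 2.
Proof. by apply: sumr_ge0 => i _; exact: sqr_ge0. Qed.

Lemma enorm_sq (x : pt) : enorm x ^+ 2 = \sum_(i < d) x ord0 i ^+ 2.
Proof. by rewrite /enorm sqr_sqrtr // sumsq_ge0. Qed.

Lemma enormZ (c : R) (x : pt) : enorm (c *: x) = `|c| * enorm x.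
Proof.
rewrite /enorm.
have -> : \sum_(i < d) (c *: x) ord0 i ^+ 2 = c ^+ 2 * \sum_(i < d) x ord0 i ^+ 2.
  by rewrite mulr_sumr; apply: eq_bigr => i _; rewrite mxE exprMn.
by rewrite sqrtrM ?sqr_ge0 // sqrtr_sqr.
Qed.

Lemma enormN (x : pt) : enorm (- x) = enorm x.
Proof. by rewrite -scaleN1r enormZ normrN normr1 mul1r. Qed.

Lemma cs (x y : pt) : \sum_(i < d) x ord0 i * y ord0 i <= enorm x * enorm y.
Proof.
have ha := enorm_sq x; have hb := enorm_sq y.
set a := enorm x in ha *; set b := enorm y in hb *.
have H : 0 <= \sum_(i < d) (b * x ord0 i - a * y ord0 i) ^+ 2.
  by apply: sumr_ge0 => i _; exact: sqr_ge0.
have E : \sum_(i < d) (b * x ord0 i - a * y ord0 i) ^+ 2 =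
   b^+2 * (\sum_(i < d) x ord0 i ^+ 2) - 2 * a * b * (\sum_(i < d) x ord0 i * y ord0 i)
   + a^+2 * (\sum_(i < d) y ord0 i ^+ 2).
  rewrite !mulr_sumr -sumrB -big_split /=; apply: eq_bigr => i _; ring.
rewrite E -ha -hb in H.
have a0 : 0 <= a by exact: enorm_ge0.
have b0 : 0 <= b by exact: enorm_ge0.
set s := \sum_(i < d) x ord0 i * y ord0 i in H *.
have [ab0|] := eqVneq (a * b) 0.
  move/eqP: ab0; rewrite mulf_eq0 => /orP[] /eqP a0'.
  - have hx : forall i, x ord0 i = 0.
      move=> i; apply/eqP; rewrite -sqrf_eq0; apply/eqP.
      move: ha; rewrite a0' expr0n /= => /esym/eqP; rewrite psumr_eq0 => [/allP /(_ i)|].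
        by rewrite mem_index_enum => /(_ isT) /implyP /(_ isT) /eqP.
      by move=> j _; exact: sqr_ge0.
    rewrite /s big1 ?a0' ?mul0r // => i _; by rewrite hx mul0r.
  - have hy : forall i, y ord0 i = 0.
      move=> i; apply/eqP; rewrite -sqrf_eq0; apply/eqP.
      move: hb; rewrite a0' expr0n /= => /esym/eqP; rewrite psumr_eq0 => [/allP /(_ i)|].
        by rewrite mem_index_enum => /(_ isT) /implyP /(_ isT) /eqP.
      by move=> j _; exact: sqr_ge0.
    rewrite /s big1 ?a0' ?mulr0 // => i _; by rewrite hy mulr0.
move=> abn0.
have abp : 0 < a * b by rewrite lt0r abn0 mulr_ge0.
have : 0 <= 2 * (a * b) * (a * b - s) by lra.
rewrite pmulr_rge0; first by rewrite subr_ge0.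
by rewrite mulr_gt0.
Qed.

Lemma enormD (x y : pt) : enorm (x + y) <= enorm x + enorm y.
Proof.
have a0 := enorm_ge0 x; have b0 := enorm_ge0 y.
rewrite -(ger0_norm (addr_ge0 a0 b0)) -sqrtr_sqr /enorm -/(enorm x) -/(enorm y).
rewrite ler_sqrt ?sqr_ge0 //.
have -> : \sum_(i < d) (x + y) ord0 i ^+ 2 = \sum_(i < d) x ord0 i ^+ 2 +
   2 * \sum_(i < d) x ord0 i * y ord0 i + \sum_(i < d) y ord0 i ^+ 2.
  rewrite mulr_sumr -!big_split /=; apply: eq_bigr => i _; rewrite mxE; ring.
rewrite -enorm_sq -enorm_sq; have := cs x y; lra.
Qed.

Lemma enormB_ge (x y : pt) : enorm x - enorm y <= enorm (x - y).
Proof. have := enormD (x - y) y; rewrite subrK; lra. Qed.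

End E.
Section T.
Variables (R : realType) (d : nat).
Local Notation pt := 'rV[R]_d.

Lemma seg_cont (z s : pt) (eps : R) : continuous (fun t : R => z + (t * eps) *: s).
Proof.
move=> t; apply: cvgD; first exact: cvg_cst.
apply: cvgZl; apply: cvgMl; exact: cvg_id.
Qed.

Lemma seg_in_O (O : set pt) (z s : pt) (eps : R) : open O -> O z ->
  (forall t, 0 <= t <= 1 -> ~ bdry O (z + (t * eps) *: s)) -> O (z + eps *: s).
Proof.
move=> oO Oz nb.
set C := (fun t : R => z + (t * eps) *: s) @` `[0, 1].
have cC : connected C.
  apply: connected_continuous_connected; first exact: segment_connected.
  apply: continuous_subspaceT; exact: seg_cont.
have sep : separated O (~` closure O).
  split.
    by apply/seteqP; split => // x [cx ncx].
  apply/seteqP; split => // x [Ox cx].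
  have /cx [y [ny Oy]] : nbhs x O by rewrite -(interior_id O).1 // in Ox.
  by apply: ny; exact: subset_closure.
have sub : C `<=` O `|` ~` closure O.
  move=> y [t tI <-]; have {}tI : 0 <= t <= 1.
    by move: tI => /=; rewrite in_itv.
  have := nb t tI; rewrite /bdry (interior_id O).1 //.
  move=> h; case: (pselect (O (z + (t * eps) *: s))) => [|nO]; [by left|right].
  by move=> cl; apply: h; split.
have [CO|CnO] := connected_subset sep sub cC.
  have := CO (z + (1 * eps) *: s); rewrite mul1r; apply.
  exists 1; last by rewrite mul1r. by rewrite /= in_itv /= lexx ler01.
exfalso; have := CnO z; apply.
  exists 0; first by rewrite /= in_itv /= lexx ler01.
  by rewrite mul0r scale0r addr0.
exact: subset_closure.
Qed.
End T.
Section N.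
Variables (R : realType) (d : nat).
Local Notation pt := 'rV[R]_d.

Lemma nbhd_inner (O : set pt) (z s : pt) (eps h : R) : open O -> 0 <= h -> h <= eps ->
  enorm s = 1 -> inner O (2 * eps) z -> inner O h (z + eps *: s).
Proof.
move=> oO h0 heps s1 [Oz dz].
have e0 : 0 <= eps by exact: le_trans heps.
have lbE : has_lbound [set enorm (z - y) | y in bdry O].
  by exists 0 => _ [y _ <-]; exact: enorm_ge0.
have le_dist : forall y, bdry O y -> dist_bd O z <= enorm (z - y).
  by move=> y By; apply: (ge_inf lbE); exists y.
have nb : forall t, 0 <= t <= 1 -> ~ bdry O (z + (t * eps) *: s).
  move=> t /andP[t0 t1] By; have := le_dist _ By.
  rewrite opprD addrA subrr add0r enormN enormZ s1 mulr1 ger0_norm ?mulr_ge0 //.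
  have : t * eps <= eps by nra.
  lra.
split; first exact: seg_in_O.
have [[y0 By0]|nE] := pselect (bdry O !=set0); last first.
  exfalso; move: dz; rewrite /dist_bd.
  have -> : [set enorm (z - y) | y in bdry O] = set0.
    apply/seteqP; split => // w [y By _]; apply: nE; by exists y.
  rewrite inf0; lra.
rewrite /dist_bd.
have : dist_bd O z - eps <= inf [set enorm (z + eps *: s - y) | y in bdry O].
  apply: lb_le_inf; first by exists (enorm (z + eps *: s - y0)); exists y0.
  move=> _ [y By <-]; have := le_dist y By.
  have := @enormD R d (z + eps *: s - y) (- (eps *: s)).
  have -> : z + eps *: s - y + - (eps *: s) = z - y.
    by rewrite addrAC addrK.
  rewrite enormN enormZ s1 mulr1 ger0_norm //; lra.
lra.
Qed.
End N.
Section I.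
Variables (R : realType) (d : nat).
Local Notation pt := 'rV[R]_d.

Lemma Ih_spec (M : seq (simplex R d)) (f : pt -> R) : Vh M f ->
  Vh M (Ih M f) /\ forall z, z \in nodes M -> Ih M f z = f z.
Proof.
move=> Vf; rewrite /Ih; apply: (epsilon_spec (inhabits (fun _ : pt => 0))
  (fun u => Vh M u /\ forall z, z \in nodes M -> u z = f z)).
by exists f.
Qed.

Lemma mesh_comb (M : seq (simplex R d)) (x : pt) : union_mesh M x ->
  exists n (lam : 'I_n -> R) (p : 'I_n -> pt),
    [/\ forall i, 0 <= lam i, \sum_i lam i = 1, forall i, p i \in nodes M &
      forall f, Vh M f -> Ih M f x = \sum_i lam i * f (p i)].
Proof.
move=> [T TM [lam [l0 [l1 ->]]]].
set p := fun i : 'I_(size (verts T)) => nth 0 (verts T) i.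
have pn : forall i, p i \in nodes M.
  move=> i; apply/flattenP; exists (verts T); first exact: map_f.
  by apply: mem_nth.
have ps : forall i, shull T (p i).
  move=> i; exists (fun j => (j == i)%:R); split; first by move=> j; case: (j == i).
  split; first by rewrite (bigD1 i) //= eqxx big1 ?addr0 // => j /negbTE ->.
  by rewrite (bigD1 i) //= eqxx scale1r big1 ?addr0 // => j /negbTE ->; rewrite scale0r.
exists (size (verts T)), lam, p; split => // f Vf.
have [[_ aff] nod] := @Ih_spec M f Vf.
have [a [b hab]] := aff T TM.
rewrite hab; last by exists lam.
have -> : \sum_i lam i * f (p i) = \sum_i lam i * (\sum_(k < d) a ord0 k * p i ord0 k + b).
  apply: eq_bigr => i _; rewrite -nod // hab //.
rewrite [RHS](eq_bigr (fun i => lam i * (\sum_(k < d) a ord0 k * p i ord0 k) + lam i * b)); last by move=> i _; rewrite mulrDr.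
rewrite big_split /= -mulr_suml l1 mul1r; congr (_ + _).
rewrite [LHS](eq_bigr (fun k => \sum_i a ord0 k * (lam i * p i ord0 k))); last first.
  by move=> k _; rewrite summxE mulr_sumr; apply: eq_bigr => i _; rewrite mxE.
rewrite exchange_big /=; apply: eq_bigr => i _; rewrite mulr_sumr.
apply: eq_bigr => k _; ring.
Qed.
End I.
Section G.
Context {disp : Order.disp_t} {T : orderType disp} {I : eqType}.
Implicit Types (s : seq I) (F : I -> T) (xo c : T).
Local Open Scope order_scope.

Lemma bmax_le s F xo c : xo <= c -> (forall y, y \in s -> F y <= c) ->
  \big[Order.max/xo]_(y <- s) F y <= c.
Proof.
move=> h0; elim: s => [|a s IH] H; rewrite ?big_nil ?big_cons //.
rewrite ge_max H ?mem_head //=; apply: IH => y ys; by apply: H; rewrite in_cons ys orbT.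
Qed.

Lemma bmax_ge s F xo y : y \in s -> F y <= \big[Order.max/xo]_(z <- s) F z.
Proof.
elim: s => [|a s IH] //; rewrite in_cons big_cons le_max => /orP[/eqP->|ys].
  by rewrite lexx.
by rewrite IH // orbT.
Qed.

Lemma bmax_ge0 s F xo : xo <= \big[Order.max/xo]_(z <- s) F z.
Proof.
elim: s => [|a s IH]; rewrite ?big_nil ?big_cons ?lexx //.
by rewrite le_max IH orbT.
Qed.

Lemma bmax_att s F xo : \big[Order.max/xo]_(z <- s) F z = xo \/
  exists2 y, y \in s & \big[Order.max/xo]_(z <- s) F z = F y.
Proof.
elim: s => [|a s IH]; rewrite ?big_nil ?big_cons; first by left.
rewrite maxEle; case: ifP => _; last by right; exists a; rewrite ?mem_head.
case: IH => [->|[y ys ->]]; first by left.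
by right; exists y => //; rewrite in_cons ys orbT.
Qed.

Lemma bmin_ge s F xo c : c <= xo -> (forall y, y \in s -> c <= F y) ->
  c <= \big[Order.min/xo]_(y <- s) F y.
Proof.
move=> h0; elim: s => [|a s IH] H; rewrite ?big_nil ?big_cons //.
rewrite le_min H ?mem_head //=; apply: IH => y ys; by apply: H; rewrite in_cons ys orbT.
Qed.

Lemma bmin_le s F xo y : y \in s -> \big[Order.min/xo]_(z <- s) F z <= F y.
Proof.
elim: s => [|a s IH] //; rewrite in_cons big_cons ge_min => /orP[/eqP->|ys].
  by rewrite lexx.
by rewrite IH // orbT.
Qed.

Lemma bmin_le0 s F xo : \big[Order.min/xo]_(z <- s) F z <= xo.
Proof.
elim: s => [|a s IH]; rewrite ?big_nil ?big_cons ?lexx //.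
by rewrite ge_min IH orbT.
Qed.

Lemma bmin_att s F xo : \big[Order.min/xo]_(z <- s) F z = xo \/
  exists2 y, y \in s & \big[Order.min/xo]_(z <- s) F z = F y.
Proof.
elim: s => [|a s IH]; rewrite ?big_nil ?big_cons; first by left.
rewrite minEle; case: ifP => _; first by right; exists a; rewrite ?mem_head.
case: IH => [->|[y ys ->]]; first by left.
by right; exists y => //; rewrite in_cons ys orbT.
Qed.

Lemma argmax_seq s F : s != [::] -> exists2 x, x \in s & forall y, y \in s -> F y <= F x.
Proof.
elim: s => [|a s IH] // _.
case: (eqVneq s [::]) => [->|sn].
  by exists a; rewrite ?mem_head // => y; rewrite inE => /eqP->.
have [b bs Hb] := IH sn.
case: (leP (F a) (F b)) => hab.
  exists b; first by rewrite in_cons bs orbT.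
  by move=> y; rewrite in_cons => /orP[/eqP->|/Hb].
exists a; first exact: mem_head.
move=> y; rewrite in_cons => /orP[/eqP->|/Hb h]; first exact: lexx.
exact: le_trans h (ltW hab).
Qed.
End G.
Lemma comb_pick (R : realType) n (lam f g : 'I_n -> R) (m c : R) :
  (forall i, 0 <= lam i) -> \sum_i lam i = 1 -> (forall i, f i <= m) ->
  m <= \sum_i lam i * f i -> c < \sum_i lam i * g i ->
  exists i, f i = m /\ c < g i.
Proof.
move=> l0 l1 fm hm hc.
have H0 : \sum_i lam i * (m - f i) = 0.
  apply/eqP; rewrite eq_le; apply/andP; split; last first.
    by apply: sumr_ge0 => i _; rewrite mulr_ge0 // subr_ge0.
  have -> : \sum_i lam i * (m - f i) = m * \sum_i lam i - \sum_i lam i * f i.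
    by rewrite mulr_sumr -sumrB; apply: eq_bigr => i _; ring.
  by rewrite l1 mulr1 subr_le0.
have Hi : forall i, lam i * (m - f i) = 0.
  move=> i; move/eqP: H0; rewrite psumr_eq0 => [/allP /(_ i)|j _].
    by rewrite mem_index_enum => /(_ isT) /implyP /(_ isT) /eqP.
  by rewrite mulr_ge0 // subr_ge0.
case: (pselect (exists i, f i = m /\ c < g i)) => // nE; exfalso.
have : \sum_i lam i * (g i - c) <= 0.
  apply: sumr_le0 => i _.
  have [->|lp] := eqVneq (lam i) 0; first by rewrite mul0r.
  have fi : f i = m.
    by move/eqP: (Hi i); rewrite mulf_eq0 (negbTE lp) /= subr_eq0 => /eqP ->.
  have gi : g i <= c.
    by rewrite leNgt; apply/negP => gc; apply: nE; exists i.
  by rewrite mulr_ge0_le0 // subr_le0.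
have -> : \sum_i lam i * (g i - c) = \sum_i lam i * g i - c * \sum_i lam i.
  by rewrite mulr_sumr -sumrB; apply: eq_bigr => i _; ring.
rewrite l1 mulr1 subr_le0 => h; lra.
Qed.

Section Main.
Variables (R : realType) (d : nat) (O : set 'rV[R]_d)
  (M : seq (simplex R d)) (h eps : R) (S : seq 'rV[R]_d)
  (w v : 'rV[R]_d -> R).
Local Notation pt := 'rV[R]_d.
Hypothesis oO : open O.
Hypothesis h0 : 0 <= h.
Hypothesis heps : h <= eps.
Hypothesis Sunit : forall s, s \in S -> enorm s = 1.
Hypothesis sub1 : inner O h `<=` Omega_h M.
Hypothesis Vw : Vh M w.
Hypothesis Vv : Vh M v.
Hypothesis hstar : forall z, interior_node O M eps z -> mlap M eps S w z <= mlap M eps S v z.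

Let F z := w z - v z.

Lemma in_mesh z x : interior_node O M eps z -> x \in nbhd eps S z -> union_mesh M x.
Proof.
move=> [zn iz]; rewrite in_cons => /orP[/eqP->|].
  apply: interior_subset; apply: sub1; case: iz => Oz dz; split => //.
  have e0 : 0 <= eps by exact: le_trans heps.
  apply: le_lt_trans dz; have H1 := heps; lra.
case/mapP => s sS ->; apply: interior_subset; apply: sub1.
apply: (@nbhd_inner R d O z s eps h oO h0) => //; exact: Sunit.
Qed.

Lemma combx z x : interior_node O M eps z -> x \in nbhd eps S z ->
  (forall y, y \in nodes M -> F y <= F z) ->
  exists n (lam : 'I_n -> R) (p : 'I_n -> pt),
    [/\ forall i, 0 <= lam i, \sum_i lam i = 1, forall i, p i \in nodes M,
      Ih M w x = \sum_i lam i * w (p i) & Ih M v x = \sum_i lam i * v (p i)].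
Proof.
move=> iz xn _; have [n [lam [p [l0 l1 pn hf]]]] := @mesh_comb R d M x (@in_mesh z x iz xn).
by exists n, lam, p; split => //; apply: hf.
Qed.

Lemma diff_le z x : interior_node O M eps z -> x \in nbhd eps S z ->
  (forall y, y \in nodes M -> F y <= F z) -> Ih M w x - Ih M v x <= F z.
Proof.
move=> iz xn mz; have [n [lam [p [l0 l1 pn -> ->]]]] := @combx z x iz xn mz.
rewrite -sumrB.
have -> : \sum_i (lam i * w (p i) - lam i * v (p i)) = \sum_i lam i * F (p i).
  by apply: eq_bigr => i _; rewrite /F mulrBr.
apply: le_trans (_ : \sum_i lam i * F z <= _).
  by apply: ler_sum => i _; apply: ler_wpM2l => //; apply: mz.
by rewrite -mulr_suml l1 mul1r.
Qed.


Lemma key z : interior_node O M eps z -> (forall y, y \in nodes M -> F y <= F z) ->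
  exists a b Pw Nw Pv Nv : R,
  [/\ mlap M eps S w z = - (eps^-1 * (eps^-1 * Pw - eps^-1 * Nw)),
      mlap M eps S v z = - (eps^-1 * (eps^-1 * Pv - eps^-1 * Nv)),
      [/\ Pw <= Pv, Nv <= Nw, 0 <= Pw, 0 <= Nw & 0 <= Pv /\ 0 <= Nv],
      (0 < Pw -> exists2 x, x \in nbhd eps S z & Ih M w x - Ih M w z = Pw) &
      ((0 < Nv -> exists2 x, x \in nbhd eps S z & Ih M v z - Ih M v x = Nv) /\
      forall x, x \in nbhd eps S z -> Ih M v x - Ih M v z <= Pv /\ Ih M w z - Ih M w x <= Nw)].
Proof.
move=> iz mz.
have zn : z \in nodes M by case: iz.
have az : Ih M w z = w z by apply: (@Ih_spec R d M w Vw).2.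
have bz : Ih M v z = v z by apply: (@Ih_spec R d M v Vv).2.
have dl : forall x, x \in nbhd eps S z -> Ih M w x - Ih M v x <= Ih M w z - Ih M v z.
  by move=> x xn; rewrite az bz; apply: (@diff_le z x iz xn mz).
rewrite /mlap /Splus /Sminus.
set s := nbhd eps S z.
set Mw := \big[Num.max/Ih M w z]_(x <- s) Ih M w x.
set mw := \big[Num.min/Ih M w z]_(x <- s) Ih M w x.
set Mv := \big[Num.max/Ih M v z]_(x <- s) Ih M v x.
set mv := \big[Num.min/Ih M v z]_(x <- s) Ih M v x.
exists 0, 0, (Mw - Ih M w z), (Ih M w z - mw), (Mv - Ih M v z), (Ih M v z - mv).
have Pw0 : Ih M w z <= Mw by apply: bmax_ge0.
have Pv0 : Ih M v z <= Mv by apply: bmax_ge0.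
have Nw0 : mw <= Ih M w z by apply: bmin_le0.
have Nv0 : mv <= Ih M v z by apply: bmin_le0.
split => //.
- split; last by split; rewrite subr_ge0.
  + have : Mw <= Mv - Ih M v z + Ih M w z.
      apply: bmax_le; first by have := Pv0; lra.
      move=> x xs; have := dl x xs; have : Ih M v x <= Mv by apply: bmax_ge.
      lra.
    lra.
  + have : mw <= mv - Ih M v z + Ih M w z.
      case: (bmin_att s (Ih M v) (Ih M v z)) => [mvE|[x xs mvE]].
        rewrite -/mv in mvE; rewrite mvE; lra.
      rewrite -/mv in mvE; rewrite mvE.
      have := dl x xs; have : mw <= Ih M w x by apply: bmin_le.
      lra.
    lra.
  + by rewrite subr_ge0.
  + by rewrite subr_ge0.
- move=> P0; case: (bmax_att s (Ih M w) (Ih M w z)) => [MwE|[x xs MwE]].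
    by rewrite -/Mw in MwE; move: P0; rewrite MwE subrr ltxx.
  by exists x => //; rewrite -/Mw in MwE; rewrite MwE.
split.
- move=> N0; case: (bmin_att s (Ih M v) (Ih M v z)) => [mvE|[x xs mvE]].
    by rewrite -/mv in mvE; move: N0; rewrite mvE subrr ltxx.
  by exists x => //; rewrite -/mv in mvE; rewrite mvE.
- move=> x xs; split.
    have : Ih M v x <= Mv by apply: bmax_ge.
    lra.
  have : mw <= Ih M w x by apply: bmin_le.
  lra.
Qed.

Lemma nodeIh z : z \in nodes M -> Ih M w z = w z /\ Ih M v z = v z.
Proof.
move=> zn; split; [exact: (@Ih_spec R d M w Vw).2 | exact: (@Ih_spec R d M v Vv).2].
Qed.

Lemma pick_node z x : interior_node O M eps z -> x \in nbhd eps S z ->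
  (forall y, y \in nodes M -> F y <= F z) ->
  F z <= Ih M w x - Ih M v x ->
  forall (g : pt -> R) c,
  (forall n (lam : 'I_n -> R) (p : 'I_n -> pt), \sum_i lam i = 1 ->
     Ih M w x = \sum_i lam i * w (p i) -> Ih M v x = \sum_i lam i * v (p i) ->
     c < \sum_i lam i * g (p i)) ->
  exists2 y, y \in nodes M & F y = F z /\ c < g y.
Proof.
move=> iz xn mz hx g c hg.
have [n [lam [p [l0 l1 pn ax bx]]]] := @combx z x iz xn mz.
have hs : F z <= \sum_i lam i * F (p i).
  move: hx; rewrite ax bx -sumrB.
  suff -> : \sum_i (lam i * w (p i) - lam i * v (p i)) = \sum_i lam i * F (p i) by [].
  by apply: eq_bigr => i _; rewrite /F mulrBr.
have [i [fi gi]] := @comb_pick R n lam (fun i => F (p i)) (fun i => g (p i)) (F z) c l0 l1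
  (fun i => mz _ (pn i)) hs (hg n lam p l1 ax bx).
by exists (p i).
Qed.

Lemma case1 z : interior_node O M eps z -> (forall y, y \in nodes M -> F y <= F z) ->
  (mlap M eps S w z < mlap M eps S v z \/ mlap M eps S w z < 0) ->
  exists2 y, y \in nodes M & F y = F z /\ w z < w y.
Proof.
move=> iz mz hc.
have zn : z \in nodes M by case: iz.
have [az bz] := @nodeIh z zn.
have [_ [_ [Pw [Nw [Pv [Nv [Ew Ev [hPP hNN hPw hNw [hPv hNv]] attw [attv bnd]]]]]]]] := @key z iz mz.
have st := hstar z iz; rewrite Ew Ev -!mulrBr in st; rewrite Ew Ev -!mulrBr in hc.
have e0 : 0 <= eps^-1 by rewrite invr_ge0; exact: le_trans h0 heps.
have le2 : eps^-1 * (eps^-1 * (Pw - Nw)) <= eps^-1 * (eps^-1 * (Pv - Nv)).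
  by apply: (ler_wpM2l e0); apply: (ler_wpM2l e0); lra.
case: hc => [lt|neg]; first by exfalso; lra.
have ep : 0 < eps^-1.
  rewrite lt_neqAle e0 andbT; apply/eqP => E; move: neg; rewrite -E !mul0r oppr0 ltxx.
  by [].
have d1 : Pv - Nv <= Pw - Nw by move: st; rewrite lerN2 !ler_pM2l.
have d2 : 0 < Pw - Nw by move: neg; rewrite oppr_lt0 !pmulr_rgt0.
have [x xs hx] := attw ltac:(lra).
have [bx _] := bnd x xs.
apply: (@pick_node z x iz xs mz).
  rewrite /F -az -bz; lra.
move=> n lam p l1 ax _; rewrite -ax -az; lra.
Qed.

Lemma case2 z : interior_node O M eps z -> (forall y, y \in nodes M -> F y <= F z) ->
  (mlap M eps S w z < mlap M eps S v z \/ 0 < mlap M eps S v z) ->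
  exists2 y, y \in nodes M & F y = F z /\ - v z < - v y.
Proof.
move=> iz mz hc.
have zn : z \in nodes M by case: iz.
have [az bz] := @nodeIh z zn.
have [_ [_ [Pw [Nw [Pv [Nv [Ew Ev [hPP hNN hPw hNw [hPv hNv]] attw [attv bnd]]]]]]]] := @key z iz mz.
have st := hstar z iz; rewrite Ew Ev -!mulrBr in st; rewrite Ew Ev -!mulrBr in hc.
have e0 : 0 <= eps^-1 by rewrite invr_ge0; exact: le_trans h0 heps.
have le2 : eps^-1 * (eps^-1 * (Pw - Nw)) <= eps^-1 * (eps^-1 * (Pv - Nv)).
  by apply: (ler_wpM2l e0); apply: (ler_wpM2l e0); lra.
case: hc => [lt|pos]; first by exfalso; lra.
have ep : 0 < eps^-1.
  rewrite lt_neqAle e0 andbT; apply/eqP => E; move: pos; rewrite -E !mul0r oppr0 ltxx.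
  by [].
have d1 : Pv - Nv <= Pw - Nw by move: st; rewrite lerN2 !ler_pM2l.
have d2 : Pv - Nv < 0 by move: pos; rewrite oppr_gt0 !pmulr_rlt0.
have [x xs hx] := attv ltac:(lra).
have [_ ax] := bnd x xs.
apply: (@pick_node z x iz xs mz).
  rewrite /F -az -bz; lra.
move=> n lam p l1 _ bx.
have -> : \sum_i lam i * - v (p i) = - Ih M v x.
  by rewrite bx -sumrN; apply: eq_bigr => i _; rewrite mulrN.
rewrite -bz; lra.
Qed.

Lemma final_pick (phi : pt -> R) :
  (forall z, interior_node O M eps z -> (forall y, y \in nodes M -> F y <= F z) ->
     exists2 y, y \in nodes M & F y = F z /\ phi z < phi y) ->
  forall y0, y0 \in nodes M ->
  exists2 b, b \in bnodes O M eps & forall y, y \in nodes M -> F y <= F b.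
Proof.
move=> H y0 y0n.
have ne : nodes M != [::] by apply/eqP => E; rewrite E in y0n.
have [z0 z0n mz0] := argmax_seq (nodes M) F ne.
set L := [seq y <- nodes M | F y == F z0].
have Ln : L != [::].
  apply/eqP => E; have : z0 \in L by rewrite mem_filter eqxx z0n.
  by rewrite E.
have [b bL mb] := argmax_seq L phi Ln.
move: bL; rewrite mem_filter => /andP[/eqP Fb bn].
have mzb : forall y, y \in nodes M -> F y <= F b by move=> y yn; rewrite Fb; apply: mz0.
case: (pselect (inner O (2 * eps) b)) => ib.
  exfalso; have [y yn [Fy py]] := H b (conj bn ib) mzb.
  have : y \in L by rewrite mem_filter Fy Fb eqxx yn.
  by move/mb; rewrite leNgt py.
exists b => //; rewrite mem_filter bn andbT; apply/negP => /asboolP.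
exact.
Qed.

Lemma main_eq : ((forall z, interior_node O M eps z ->
      mlap M eps S w z < mlap M eps S v z \/ mlap M eps S w z < 0) \/
   (forall z, interior_node O M eps z ->
      mlap M eps S w z < mlap M eps S v z \/ 0 < mlap M eps S v z)) ->
  (\big[maxe/-oo%E]_(z <- nodes M) (w z - v z)%:E =
   \big[maxe/-oo%E]_(z <- bnodes O M eps) (w z - v z)%:E)%E.
Proof.
move=> hc.
have fp : forall y0, y0 \in nodes M ->
    exists2 b, b \in bnodes O M eps & forall y, y \in nodes M -> F y <= F b.
  case: hc => hc.
    apply: (@final_pick w) => z iz mz; exact: (@case1 z iz mz (hc z iz)).
  apply: (@final_pick (fun y => - v y)) => z iz mz; exact: (@case2 z iz mz (hc z iz)).
apply/eqP; rewrite eq_le; apply/andP; split.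
  apply: bmax_le; first exact: leNye.
  move=> y yn; have [b bb mb] := fp y yn.
  apply: (@le_trans _ _ (F b)%:E); first by rewrite lee_fin; apply: mb.
  by apply: bmax_ge.
apply: bmax_le; first exact: leNye.
move=> y; rewrite mem_filter => /andP[_ yn].
by apply: bmax_ge.
Qed.
End Main.

Theorem theorem3p2 (R : realType) (d : nat) (O : set 'rV[R]_d)
  (M : seq (simplex R d)) (h eps theta : R) (S : seq 'rV[R]_d)
  (w v : 'rV[R]_d -> R) :
  (0 < d)%N -> is_domain O -> ebounded O -> continuous_boundary O ->
  is_mesh M -> h = meshsize M ->
  inner O h `<=` Omega_h M -> Omega_h M `<=` O ->
  h <= eps -> eps <= diamset O -> 0 < theta -> theta <= 1 ->
  theta_net S theta ->
  Vh M w -> Vh M v ->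
  (forall z, interior_node O M eps z -> mlap M eps S w z <= mlap M eps S v z) ->
  ((forall z, interior_node O M eps z ->
      mlap M eps S w z < mlap M eps S v z \/ mlap M eps S w z < 0) \/
   (forall z, interior_node O M eps z ->
      mlap M eps S w z < mlap M eps S v z \/ 0 < mlap M eps S v z)) ->
  (\big[maxe/-oo%E]_(z <- nodes M) (w z - v z)%:E =
   \big[maxe/-oo%E]_(z <- bnodes O M eps) (w z - v z)%:E)%E.
Proof.
move=> _ [oO _] _ _ _ hE sub1 _ heps _ _ _ [Sunit _] Vw Vv hstar hc.
have h0 : 0 <= h by rewrite hE; apply: bmax_ge0.
exact: (@main_eq R d O M h eps S w v oO h0 heps Sunit sub1 Vw Vv hstar hc).
Qed.
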